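(* Every commutative monoid $S$ that is artinian (i.e. $S_S$ satisfies the descending chain condition on congruences) satisfies condition $A$.
   Context: A monoid $S$ satisfies condition $A$ if every right $S$-act satisfies the ascending chain condition on cyclic subacts. A congruence on $S_S$ is an equivalence relation $\rho$ on $S$ with $a\,\rho\,b\Rightarrow as\,\rho\,bs$ for all $s\in S$. *)

(* Defs.v *)
From Stdlib Require Import Arith.

Definition is_monoid {S : Type} (mul : S -> S -> S) (e : S) : Prop :=
  (forall x y z, mul x (mul y z) = mul (mul x y) z) /\
  (forall x, mul e x = x) /\ (forall x, mul x e = x).

Definition is_commutative {S : Type} (mul : S -> S -> S) : Prop :=
  forall x y, mul x y = mul y x.

Definition is_right_act {S : Type} (mul : S -> S -> S) (e : S)
  {A : Type} (act : A -> S -> A) : Prop :=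
  (forall a, act a e = a) /\
  (forall a s t, act (act a s) t = act a (mul s t)).

Definition cyclic_subact {S A : Type} (act : A -> S -> A) (a : A) : A -> Prop :=
  fun x => exists s, x = act a s.

Definition subset_of {X : Type} (P Q : X -> Prop) : Prop := forall x, P x -> Q x.

Definition acc_cyclic_subacts {S A : Type} (act : A -> S -> A) : Prop :=
  forall a : nat -> A,
    (forall n, subset_of (cyclic_subact act (a n)) (cyclic_subact act (a (Nat.succ n)))) ->
    exists N, forall m, N <= m ->
      subset_of (cyclic_subact act (a m)) (cyclic_subact act (a N)).

Definition condition_A {S : Type} (mul : S -> S -> S) (e : S) : Prop :=
  forall (A : Type) (act : A -> S -> A),
    is_right_act mul e act -> acc_cyclic_subacts act.

(* A congruence on S_S: a right-compatible equivalence relation on S. *)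
Definition right_congruence {S : Type} (mul : S -> S -> S) (rho : S -> S -> Prop) : Prop :=
  (forall a, rho a a) /\
  (forall a b, rho a b -> rho b a) /\
  (forall a b c, rho a b -> rho b c -> rho a c) /\
  (forall a b s, rho a b -> rho (mul a s) (mul b s)).

Definition artinian {S : Type} (mul : S -> S -> S) : Prop :=
  forall rho : nat -> S -> S -> Prop,
    (forall n, right_congruence mul (rho n)) ->
    (forall n a b, rho (Nat.succ n) a b -> rho n a b) ->
    exists N, forall m, N <= m -> forall a b, rho N a b -> rho m a b.

(* Main.v *)
Require Import Defs.
From Stdlib Require Import Arith Lia.

Fixpoint pw {S : Type} (mul : S -> S -> S) (e s : S) (k : nat) : S :=
  match k with 0 => e | Datatypes.S k => mul (pw mul e s k) s end.

Lemma dcc_pow (S : Type) (mul : S -> S -> S) (e : S) :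
  is_monoid mul e -> artinian mul -> forall s : S,
  exists K v, pw mul e s K = mul (pw mul e s (Datatypes.S K)) v.
Proof.
  intros [As [Le Re]] Art s.
  set (rho := fun k x y => x = y \/ ((exists z, x = mul (pw mul e s k) z) /\
                                    (exists z, y = mul (pw mul e s k) z))).
  destruct (Art rho) as [K HK].
  - intros n; unfold rho; repeat split.
    + auto.
    + intros a b [H|[H1 H2]]; auto.
    + intros a b c [H|[H1 H2]] [H'|[H1' H2']]; subst; auto.
    + intros a b t [H|[[z1 H1] [z2 H2]]]; [subst; auto|right; split].
      * exists (mul z1 t); subst; now rewrite As.
      * exists (mul z2 t); subst; now rewrite As.
  - intros n a b [H|[[z1 H1] [z2 H2]]]; [left; auto|right; split].
    + exists (mul s z1); subst; simpl; now rewrite As.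
    + exists (mul s z2); subst; simpl; now rewrite As.
  - destruct (HK (Datatypes.S K) (le_S _ _ (le_n K)) (pw mul e s K) (pw mul e s (Datatypes.S K))) as [H|[[z H] _]].
    + right; split; [exists e; now rewrite Re| exists s; reflexivity].
    + exists K, e. rewrite Re; exact H.
    + exists K, z; exact H.
Qed.

Theorem mainTheorem17 (S : Type) (mul : S -> S -> S) (e : S) :
  is_monoid mul e -> is_commutative mul -> artinian mul -> condition_A mul e.
Proof.
  intros Mon Com Art. pose proof Mon as [As [Le Re]].
  intros A act [Ae Am] a Hch.
  assert (Step : forall n, exists s, a n = act (a (Datatypes.S n)) s).
  { intros n. destruct (Hch n (a n)) as [s Hs]; [exists e; auto|eauto]. }
  set (kap := fun n x y => act (a n) x = act (a n) y).
  destruct (Art kap) as [N HN].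
  - intros n; unfold kap; repeat split; try congruence; try (intros; rewrite <- !Am; congruence).
  - intros n x y H; unfold kap in *. destruct (Step n) as [s Hs].
    rewrite Hs, !Am, (Com s x), (Com s y), <- !Am. exact (f_equal (fun z => act z s) H).
  - assert (Desc : forall n m, n <= m -> forall x y, kap m x y -> kap n x y).
    { intros n m Hnm; induction Hnm; auto.
      intros x y H; apply IHHnm. unfold kap in *. destruct (Step m) as [s Hs].
      rewrite Hs, !Am, (Com s x), (Com s y), <- !Am. exact (f_equal (fun z => act z s) H). }
    assert (Back : forall m, N <= m -> exists v, a (Datatypes.S m) = act (a m) v).
    { intros m Hm. destruct (Step m) as [s Hs].
      set (b := a (Datatypes.S m)).
      assert (C1 : forall x y, act b (mul s x) = act b (mul s y) -> act b x = act b y).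
      { intros x y H. rewrite <- !Am in H. fold b in Hs. rewrite <- Hs in H.
        assert (kap N x y) by (apply (Desc N m Hm); exact H).
        apply (HN (Datatypes.S m) (le_S _ _ Hm)); assumption. }
      assert (Ck : forall k x y, act b (mul (pw mul e s k) x) = act b (mul (pw mul e s k) y)
                    -> act b x = act b y).
      { induction k; simpl; intros x y H.
        - rewrite !Le in H; exact H.
        - apply C1, IHk. rewrite !As. exact H. }
      destruct (dcc_pow S mul e Mon Art s) as [K [v Hv]].
      exists v. simpl in Hv. fold b. rewrite Hs, Am.
      symmetry. transitivity (act b e); [apply (Ck K) | apply Ae].
      rewrite Re, As, <- Hv. reflexivity. }
    assert (Reach : forall m, N <= m -> exists t, a m = act (a N) t).
    { intros m Hm; induction Hm as [|m0 Hm IHHm].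
      - exists e; auto.
      - destruct IHHm as [t Ht]. destruct (Back m0 Hm) as [v Hv].
        exists (mul t v). rewrite Hv, Ht, Am; reflexivity. }
    exists N. intros m Hm x [u Hu]. destruct (Reach m Hm) as [t Ht].
    exists (mul t u). rewrite Hu, Ht, Am; reflexivity.
Qed.
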